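(* Let $\mathcal{X}$ be a finite set, let $H:\mathcal{X}^2\to\mathbb{R}$ be any function and let $r\in\mathcal{P}_+(\mathcal{X})$. Then there exist functions $\kappa:\mathcal{X}\to\mathbb{R}$ and $\delta:\mathcal{X}\to\mathbb{R}$ such that the function \[ w(y|x) = \exp\bigl(H(x,y)+\kappa(y)-\kappa(x)-\delta(y)\bigr),\qquad (x,y)\in\mathcal{X}^2, \] is a Markov kernel on $\mathcal{X}$ whose stationary distribution is $r$, i.e. $\sum_{x\in\mathcal{X}} r(x)w(y|x)=r(y)$ for all $y\in\mathcal{X}$. Moreover, $\delta$ is uniquely determined, and $\kappa$ is unique up to an additive constant.
   Context: $\mathcal{P}_+(\mathcal{X})$ denotes the set of strictly positive probability distributions on the finite set $\mathcal{X}$ (functions $r:\mathcal{X}\to(0,\infty)$ with $\sum_x r(x)=1$). A Markov kernel on $\mathcal{X}$ is a function $w:\mathcal{X}^2\to[0,\infty)$, written $w(y|x)$, with $\sum_{y\in\mathcal{X}}w(y|x)=1$ for every $x\in\mathcal{X}$. A distribution $p$ is a stationary distribution of $w$ if $\sum_x w(y|x)p(x)=p(y)$ for all $y$; a strictly positive Markov kernel has a unique stationary distribution. *)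

(* Defs.v *)
From HB Require Import structures.
From mathcomp Require Import all_boot all_order all_algebra.
From mathcomp Require Import reals.
From mathcomp Require Import sequences.
From mathcomp.analysis Require Import exp.
Set Implicit Arguments. Unset Strict Implicit. Unset Printing Implicit Defensive.
Import Order.TTheory GRing.Theory Num.Theory.
Local Open Scope ring_scope.

(* A kernel w is written w y x, read w(y|x). *)
Definition markov_kernel (R : realType) (X : finType) (w : X -> X -> R) : Prop :=
  (forall x y, 0 <= w y x) /\ (forall x, \sum_(y : X) w y x = 1).

Definition stationary (R : realType) (X : finType) (w : X -> X -> R) (p : X -> R) : Prop :=
  forall y, \sum_(x : X) w y x * p x = p y.

Definition pos_distr (R : realType) (X : finType) (r : X -> R) : Prop :=
  (forall x, 0 < r x) /\ \sum_(x : X) r x = 1.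

Definition tilted_kernel (R : realType) (X : finType) (H : X -> X -> R)
  (kappa delta : X -> R) : X -> X -> R :=
  fun y x => expR (H x y + kappa y - kappa x - delta y).

(* Main.v *)
Require Import Defs.
From HB Require Import structures.
From mathcomp Require Import all_boot all_order all_algebra.
From mathcomp Require Import reals.
From mathcomp Require Import sequences.
From mathcomp.analysis Require Import exp.
From mathcomp Require Import all_classical all_reals all_analysis.
From mathcomp Require Import ring lra.
Import Order.TTheory GRing.Theory Num.Theory.
Import numFieldNormedType.Exports.
Local Open Scope ring_scope.
Set Implicit Arguments. Unset Strict Implicit.

Definition RT (R : realType) : topologicalType :=
  numFieldTopology.Real_sort__canonical__order_topology_POrderedTopological R.
Definition PT (R : realType) (X : finType) := @prod_topology X (fun _ => RT R).

Lemma cont_proj (R : realType) (X : finType) (x : X) :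
  continuous (fun f : PT R X => f x).
Proof. exact: (@proj_continuous X (fun _ => RT R)). Qed.

Lemma cont_sum (R : realType) (X : finType) (I : finType) (F : I -> PT R X -> R) :
  (forall i, continuous (F i)) -> continuous (fun f : PT R X => \sum_i F i f).
Proof.
move=> h; apply: continuous_big => // -[a b]. exact: add_continuous.
Qed.

Lemma cont_comp (R : realType) (X : finType) (g : PT R X -> R) (h : R -> R) :
  continuous g -> (forall f, {for g f, continuous h}) -> continuous (fun f => h (g f)).
Proof. move=> cg ch f; exact: continuous_comp (cg f) (ch f). Qed.

Lemma cont_mull (R : realType) (X : finType) (g : PT R X -> R) (c : R) :
  continuous g -> continuous (fun f => c * g f).
Proof. move=> cg f. have := @continuousM _ _ (fun _ => c) g f (@cst_continuous (PT R X) R c f) (cg f). by []. Qed.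

Lemma cont_sub (R : realType) (X : finType) (g h : PT R X -> R) :
  continuous g -> continuous h -> continuous (fun f => g f - h f).
Proof. move=> cg ch f. have := continuousB (cg f) (ch f). by []. Qed.

Lemma sum_ge_term (R : realType) (I : finType) (F : I -> R) i0 :
  (forall i, 0 <= F i) -> F i0 <= \sum_i F i.
Proof. move=> h; rewrite (bigD1 i0) //= lerDl; exact: sumr_ge0. Qed.

Lemma sum_le_term (R : realType) (I : finType) (F : I -> R) i0 :
  (forall i, F i <= 0) -> \sum_i F i <= F i0.
Proof.
move=> h; have := @sum_ge_term R I (fun i => - F i) i0.
rewrite sumrN lerN2; apply=> i; rewrite oppr_ge0; exact: h.
Qed.

Lemma ex_argmax (R : realType) (X : finType) (x0 : X) (f : X -> R) :
  exists xm, forall x, f x <= f xm.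
Proof.
case: (@arg_maxP _ R X x0 xpredT f isT) => m _ h.
by exists m => x; apply: h.
Qed.

Lemma ln_le_sub1 (R : realType) (u : R) : 0 < u -> ln u <= u - 1.
Proof.
move=> hu; have := @le_ln1Dx R (u - 1); rewrite addrCA subrr addr0; apply; lra.
Qed.

Definition Sf (R : realType) (X : finType) (H : X -> X -> R) (r al : X -> R) (y : X) : R :=
  \sum_x r x * expR (H x y) * expR (al x).
Definition Psi (R : realType) (X : finType) (H : X -> X -> R) (r al : X -> R) : R :=
  \sum_y r y * ln (Sf H r al y) - \sum_x r x * al x.
Definition Lb (R : realType) (X : finType) (H : X -> X -> R) (r : X -> R) (x0 : X) : R :=
  \sum_y r y * ln (r x0 * expR (H x0 y)).

Lemma Sf_gt0 (R : realType) (X : finType) (H : X -> X -> R) (r al : X -> R) y :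
  (forall x, 0 < r x) -> 0 < Sf H r al y.
Proof.
move=> hr; have pos x : 0 < r x * expR (H x y) * expR (al x).
  by rewrite !mulr_gt0 // expR_gt0.
apply: (lt_le_trans (pos y)); apply: (@sum_ge_term R X (fun x => r x * expR (H x y) * expR (al x)) y).
by move=> x; apply: ltW.
Qed.

Lemma Psi_shift (R : realType) (X : finType) (H : X -> X -> R) (r al : X -> R) c :
  (forall x, 0 < r x) -> \sum_x r x = 1 ->
  Psi H r (fun x => al x + c) = Psi H r al.
Proof.
move=> hr hs; rewrite /Psi.
have E y : Sf H r (fun x => al x + c) y = expR c * Sf H r al y.
  rewrite /Sf mulr_sumr; apply: eq_bigr => x _; rewrite expRD; ring.
rewrite (eq_bigr (fun y => r y * ln (Sf H r al y) + c * r y)); last first.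
  move=> y _; rewrite E lnM ?posrE ?expR_gt0 ?Sf_gt0 // expRK; ring.
rewrite [X in _ - X](eq_bigr (fun x => r x * al x + c * r x)); last first.
  by move=> x _; ring.
rewrite !big_split /= -!mulr_sumr hs; ring.
Qed.

Lemma Psi_lb (R : realType) (X : finType) (H : X -> X -> R) (r al : X -> R) x0 :
  (forall x, 0 < r x) -> \sum_x r x = 1 ->
  Lb H r x0 + al x0 - \sum_x r x * al x <= Psi H r al.
Proof.
move=> hr hs; rewrite /Psi.
suff : Lb H r x0 + al x0 <= \sum_y r y * ln (Sf H r al y) by lra.
have -> : Lb H r x0 + al x0 = \sum_y r y * (ln (r x0 * expR (H x0 y)) + al x0).
  rewrite [RHS](eq_bigr (fun y => r y * ln (r x0 * expR (H x0 y)) + al x0 * r y)); last by move=> y _; ring.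
  by rewrite big_split /= -mulr_sumr hs mulr1.
apply: ler_sum => y _; apply: ler_wpM2l; first exact: ltW.
have p0 : 0 < r x0 * expR (H x0 y) by rewrite mulr_gt0 // expR_gt0.
rewrite -[al x0]expRK -lnM ?posrE ?expR_gt0 //.
rewrite ler_ln ?posrE ?mulr_gt0 ?expR_gt0 ?Sf_gt0 //.
apply: (@sum_ge_term R X (fun x => r x * expR (H x y) * expR (al x)) x0) => x.
by rewrite !mulr_ge0 // ?expR_ge0 // ltW.
Qed.

Lemma Psi_coer (R : realType) (X : finType) (H : X -> X -> R) (r al : X -> R) xm xM :
  (forall x, 0 < r x) -> \sum_x r x = 1 ->
  (forall x, al xm <= al x) -> (forall x, al x <= al xM) ->
  - \sum_x `|Lb H r x| + r xm * (al xM - al xm) <= Psi H r al.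
Proof.
move=> hr hs hm hM.
have h1 := @Psi_lb R X H r al xM hr hs.
have h2 : - \sum_x `|Lb H r x| <= Lb H r xM.
  have := @sum_ge_term R X (fun x => `|Lb H r x|) xM (fun x => normr_ge0 _).
  have := ler_norm (- Lb H r xM); rewrite normrN; lra.
have h3 : \sum_x r x * al x <= al xM + r xm * (al xm - al xM).
  have e : \sum_x r x * (al x - al xM) = \sum_x r x * al x - al xM.
    rewrite (eq_bigr (fun x => r x * al x - al xM * r x)); last by move=> x _; ring.
    by rewrite sumrB -mulr_sumr hs mulr1.
  have := @sum_le_term R X (fun x => r x * (al x - al xM)) xm.
  rewrite e; move=> h.
  have : \sum_x r x * al x - al xM <= r xm * (al xm - al xM).
    apply: h => x; apply: mulr_ge0_le0; first exact: ltW.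
    by rewrite subr_le0.
  lra.
lra.
Qed.

Lemma Psi_cont (R : realType) (X : finType) (H : X -> X -> R) (r : X -> R) :
  (forall x, 0 < r x) -> continuous (fun f : PT R X => Psi H r f).
Proof.
move=> hr.
apply: (@cont_sub R X (fun f : PT R X => \sum_y r y * ln (Sf H r f y)) (fun f : PT R X => \sum_x r x * f x)).
  apply: (@cont_sum R X X (fun y (f : PT R X) => r y * ln (Sf H r f y))) => y.
  apply: (@cont_mull R X (fun f : PT R X => ln (Sf H r f y))).
  suff cS : continuous (fun f : PT R X => Sf H r f y).
    move=> f; apply: continuous_comp; first exact: cS.
    by apply: continuous_ln; exact: Sf_gt0.
  apply: (@cont_sum R X X (fun x (f : PT R X) => r x * expR (H x y) * expR (f x))) => x.
  apply: (@cont_mull R X (fun f : PT R X => expR (f x))).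
  move=> f; apply: continuous_comp; first exact: cont_proj.
  exact: continuous_expR.
apply: (@cont_sum R X X (fun x (f : PT R X) => r x * f x)) => x.
apply: (@cont_mull R X (fun f : PT R X => f x)); exact: cont_proj.
Qed.

Lemma Psi_min (R : realType) (X : finType) (H : X -> X -> R) (r : X -> R) :
  (forall x, 0 < r x) -> \sum_x r x = 1 ->
  exists a : X -> R, forall al, Psi H r a <= Psi H r al.
Proof.
move=> hr hs.
have [x0 _|h0] := pickP (xpredT : pred X); last first.
  by move: hs; rewrite big_pred0 // => /eqP; rewrite eq_sym oner_eq0.
pose c0 := - \sum_x `|Lb H r x|.
pose D := Psi H r (fun _ => 0) - c0.
have D0 : 0 <= D.
  have := @Psi_coer R X H r (fun _ => 0) x0 x0 hr hs (fun _ => lexx _) (fun _ => lexx _).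
  rewrite /D /c0; lra.
pose K := D * \sum_x (r x)^-1.
have K0 : 0 <= K by rewrite mulr_ge0 // sumr_ge0 // => x _; rewrite invr_ge0 ltW.
pose B := [set f : PT R X | forall i, `[0, K]%classic (f i)]%classic.
have cB : compact B := tychonoff (fun i => @segment_compact R 0 K).
have B0 : B (fun _ => 0).
  by move=> i /=; rewrite in_itv /= lexx K0.
have Bn : (B !=set0)%classic by exists (fun _ => 0).
have [a aB amin] := compact_EVT_min Bn cB (continuous_subspaceT (@Psi_cont R X H r hr)).
exists a => al.
have amin0 : Psi H r a <= Psi H r (fun _ => 0) by apply: amin; exact: mem_set.
case: (ltP (Psi H r (fun _ => 0)) (Psi H r al)) => h; first lra.
have [xm hm] := ex_argmax x0 (fun x => - al x).
have [xM hM] := ex_argmax x0 al.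
have hm' : forall x, al xm <= al x by move=> x; have := hm x; rewrite lerN2.
have hc := @Psi_coer R X H r al xm xM hr hs hm' hM.
have s0 : 0 <= al xM - al xm by have := hm' xM; lra.
have hsD : (al xM - al xm) * r xm <= D by rewrite /D /c0; lra.
have hsK : al xM - al xm <= K.
  apply: (le_trans (y := D / r xm)); first by rewrite ler_pdivlMr.
  apply: ler_wpM2l => //.
  by apply: (@sum_ge_term R X (fun x => (r x)^-1) xm) => x; rewrite invr_ge0 ltW.
rewrite -(@Psi_shift R X H r al (- al xm) hr hs).
apply: amin; apply: mem_set => i /=; rewrite in_itv /=.
have := hm' i; have := hM i; move=> h1 h2.
apply/andP; split; lra.
Qed.

Lemma Psi_row (R : realType) (X : finType) (H : X -> X -> R) (r a : X -> R) x0 :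
  (forall x, 0 < r x) -> \sum_x r x = 1 ->
  (forall al, Psi H r a <= Psi H r al) ->
  \sum_y expR (H x0 y + a x0 + (ln (r y) - ln (Sf H r a y))) = 1.
Proof.
move=> hr hs amin.
set Q := \sum_y _.
have eb y : expR (ln (r y) - ln (Sf H r a y)) = r y / Sf H r a y.
  by rewrite expRB !lnK ?posrE ?Sf_gt0.
have Q0 : 0 < Q.
  apply: (lt_le_trans _ (@sum_ge_term R X (fun y => expR (H x0 y + a x0 + (ln (r y) - ln (Sf H r a y)))) x0 (fun y => expR_ge0 _))).
  exact: expR_gt0.
pose t := - ln Q.
pose al := fun x => a x + (if x == x0 then t else 0).
have Sal y : Sf H r al y = Sf H r a y + r x0 * expR (H x0 y) * expR (a x0) * (expR t - 1).
  suff : Sf H r al y - Sf H r a y = r x0 * expR (H x0 y) * expR (a x0) * (expR t - 1) by lra.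
  rewrite /Sf -sumrB (bigD1 x0) //= big1 ?addr0.
    by rewrite /al eqxx expRD; ring.
  by move=> x /negbTE hx; rewrite /al hx addr0 subrr.
have Sum1 : \sum_x r x * al x = \sum_x r x * a x + r x0 * t.
  rewrite /al (eq_bigr (fun x => r x * a x + r x * (if x == x0 then t else 0))); last by move=> x _; ring.
  have z : \sum_(i | i != x0) r i * (if i == x0 then t else 0) = 0.
    by apply: big1 => x /negbTE ->; exact: mulr0.
  by rewrite big_split /= [X in _ + X](bigD1 x0) //= eqxx z addr0.
have Sum2 : \sum_y r y * ln (Sf H r al y) <=
    \sum_y r y * ln (Sf H r a y) + r x0 * (expR t - 1) * Q.
  rewrite /Q mulr_sumr -big_split /=; apply: ler_sum => y _.
  have Sp := @Sf_gt0 R X H r a y hr.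
  have Sp' := @Sf_gt0 R X H r al y hr.
  have hl : ln (Sf H r al y) <= ln (Sf H r a y) + (Sf H r al y / Sf H r a y - 1).
    have := @ln_le_sub1 R (Sf H r al y / Sf H r a y) (divr_gt0 Sp' Sp).
    rewrite ln_div ?posrE //; lra.
  rewrite (expRD (H x0 y + a x0)) eb (expRD (H x0 y)).
  apply: (le_trans (ler_wpM2l (ltW (hr y)) hl)).
  set S := Sf H r a y.
  suff -> : r y * (ln S + (Sf H r al y / S - 1)) = r y * ln S + r x0 * (expR t - 1) * (expR (H x0 y) * expR (a x0) * (r y / S)) by [].
  rewrite Sal -/S; field; by rewrite gt_eqF.
have et : expR t = Q^-1 by rewrite /t expRN lnK ?posrE.
have hP : Psi H r al <= Psi H r a + r x0 * (1 - Q + ln Q).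
  rewrite /Psi Sum1.
  have : r x0 * (expR t - 1) * Q = r x0 * (1 - Q).
    by rewrite et; field; rewrite gt_eqF.
  rewrite /t in Sum2 *; lra.
have := amin al => h.
have h2 : 0 <= r x0 * (1 - Q + ln Q) by lra.
have h3 : 0 <= 1 - Q + ln Q by rewrite -(pmulr_rge0 _ (hr x0)).
apply/eqP; apply/negPn/negP => hQ.
have hl : ln Q != 0.
  apply/negP => /eqP hl; move/negP: hQ; apply; apply/eqP.
  by rewrite -(lnK (x := Q)) ?posrE // hl expR0.
have := expR_gt1Dx hl; rewrite lnK ?posrE //; lra.
Qed.

Lemma uniq_part (R : realType) (X : finType) (H : X -> X -> R) (r : X -> R)
  (hr : pos_distr r) (kappa1 delta1 kappa2 delta2 : X -> R) :
      markov_kernel (tilted_kernel H kappa1 delta1) ->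
      stationary (tilted_kernel H kappa1 delta1) r ->
      markov_kernel (tilted_kernel H kappa2 delta2) ->
      stationary (tilted_kernel H kappa2 delta2) r ->
      delta1 = delta2 /\ exists c : R, forall x, kappa1 x = kappa2 x + c.
Proof.
case: hr => hr hs [_ m1] s1 [_ m2] s2.
have [x0 _|h0] := pickP (xpredT : pred X); last first.
  by move: hs; rewrite big_pred0 // => /eqP; rewrite eq_sym oner_eq0.
pose W1 := tilted_kernel H kappa1 delta1.
pose W2 := tilted_kernel H kappa2 delta2.
pose d := fun x => kappa2 x - kappa1 x.
pose e := fun y => kappa1 y - delta1 y - kappa2 y + delta2 y.
have rel y x : W1 y x = W2 y x * expR (d x + e y).
  by rewrite /W1 /W2 /tilted_kernel -expRD /d /e; congr expR; ring.
have W2p y x : 0 < W2 y x by exact: expR_gt0.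
have [xM hM] := ex_argmax x0 d.
set D := d xM.
have {}hM : forall x, d x <= D by exact: hM.
have stepa y : 0 <= e y + D.
  rewrite leNgt; apply/negP => hneg.
  have h1 := s1 y; have h2 := s2 y.
  have : \sum_x W1 y x * r x < \sum_x W2 y x * r x.
    rewrite [X in _ < X](bigD1 x0) //= [X in X < _](bigD1 x0) //=.
    apply: ltr_leD.
      have -> : W1 y x0 * r x0 = (W2 y x0 * r x0) * expR (d x0 + e y) by rewrite rel; ring.
      have p0 : 0 < W2 y x0 * r x0 by rewrite mulr_gt0.
      have q1 : expR (d x0 + e y) < 1 by rewrite expR_lt1; have := hM x0; lra.
      by rewrite -subr_gt0 -{1}(mulr1 (W2 y x0 * r x0)) -mulrBr mulr_gt0 // subr_gt0.
    apply: ler_sum => x _.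
    have -> : W1 y x * r x = (W2 y x * r x) * expR (d x + e y) by rewrite rel; ring.
    have p0 : 0 < W2 y x * r x by rewrite mulr_gt0.
    have q1 : expR (d x + e y) <= 1 by rewrite expR_le1; have := hM x; lra.
    by rewrite -subr_ge0 -{1}(mulr1 (W2 y x * r x)) -mulrBr mulr_ge0 // ?subr_ge0 // ltW.
  rewrite h1 h2; lra.
have stepb y : e y = - D.
  have h1 := m1 xM; have h2 := m2 xM.
  have hz : \sum_y0 W2 y0 xM * (expR (D + e y0) - 1) = 0.
    rewrite (eq_bigr (fun y0 => W1 y0 xM - W2 y0 xM)); last by move=> y0 _; rewrite rel; ring.
    by rewrite sumrB h1 h2 subrr.
  have hnn : forall y0, xpredT y0 -> 0 <= W2 y0 xM * (expR (D + e y0) - 1).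
    move=> y0 _; apply: mulr_ge0; first exact: ltW.
    have := expR_ge1Dx (D + e y0); have := stepa y0; lra.
  have := @psumr_eq0P R X xpredT (fun y0 => W2 y0 xM * (expR (D + e y0) - 1)) hnn hz y isT.
  move=> /eqP; rewrite mulf_eq0 gt_eqF //= subr_eq0 => /eqP h.
  have : D + e y = 0 by apply: expR_inj; rewrite h expR0.
  lra.
have stepc x : d x = D.
  have h1 := s1 x0; have h2 := s2 x0.
  have hz : \sum_x1 W2 x0 x1 * r x1 * (1 - expR (d x1 - D)) = 0.
    rewrite (eq_bigr (fun x1 => W2 x0 x1 * r x1 - W1 x0 x1 * r x1)); last first.
      by move=> x1 _; rewrite rel stepb; ring.
    by rewrite sumrB h1 h2 subrr.
  have hnn : forall x1, xpredT x1 -> 0 <= W2 x0 x1 * r x1 * (1 - expR (d x1 - D)).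
    move=> x1 _; apply: mulr_ge0; first by apply: mulr_ge0; apply: ltW.
    rewrite subr_ge0 expR_le1; have := hM x1; lra.
  have := @psumr_eq0P R X xpredT (fun x1 => W2 x0 x1 * r x1 * (1 - expR (d x1 - D))) hnn hz x isT.
  move=> /eqP; rewrite !mulf_eq0 (gt_eqF (W2p x0 x)) (gt_eqF (hr x)) /= subr_eq0 => /eqP h.
  have : d x - D = 0 by apply: expR_inj; rewrite -h expR0.
  lra.
split.
  apply: funext => y; have := stepb y; have := stepc y; rewrite /e /d; lra.
exists (- D) => x; have := stepc x; rewrite /d; lra.
Qed.

Unset Implicit Arguments.

Theorem theorem1 (R : realType) (X : finType) (H : X -> X -> R) (r : X -> R)
  (hr : pos_distr r) :
  (exists kappa delta : X -> R,
      markov_kernel (tilted_kernel H kappa delta) /\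
      stationary (tilted_kernel H kappa delta) r)
  /\
  (forall kappa1 delta1 kappa2 delta2 : X -> R,
      markov_kernel (tilted_kernel H kappa1 delta1) ->
      stationary (tilted_kernel H kappa1 delta1) r ->
      markov_kernel (tilted_kernel H kappa2 delta2) ->
      stationary (tilted_kernel H kappa2 delta2) r ->
      delta1 = delta2 /\ exists c : R, forall x, kappa1 x = kappa2 x + c).
Proof.
split; last first.
  by move=> k1 d1 k2 d2; apply: uniq_part.
case: hr => hr hs.
have [a amin] := @Psi_min R X H r hr hs.
pose be := fun y => ln (r y) - ln (Sf H r a y).
exists (fun x => - a x), (fun y => - a y - be y).
have tk y x : tilted_kernel H (fun x => - a x) (fun y => - a y - be y) y x
    = expR (H x y + a x + be y).
  by rewrite /tilted_kernel; congr expR; ring.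
split.
  split; first by move=> x y; exact: expR_ge0.
  move=> x; rewrite (eq_bigr (fun y => expR (H x y + a x + be y))); last by move=> y _; exact: tk.
  exact: (@Psi_row R X H r a x hr hs amin).
move=> y.
have Sp := @Sf_gt0 R X H r a y hr.
rewrite (eq_bigr (fun x => (r y / Sf H r a y) * (r x * expR (H x y) * expR (a x)))); last first.
  move=> x _; rewrite tk (expRD (H x y + a x)) (expRD (H x y)) /be expRB !lnK ?posrE //; ring.
by rewrite -mulr_sumr -/(Sf H r a y); field; rewrite gt_eqF.
Qed.
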